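(* Let $H_1$ and $H_2$ be graphs such that either (i) $m_2(H_1) > m_2(H_2) > 1$, $H_2$ is strictly $2$-balanced and $H_1$ is strictly balanced with respect to $d_2(\cdot,H_2)$; or (ii) $m_2(H_1) = m_2(H_2) > 1$ and $H_1$ and $H_2$ are both strictly $2$-balanced. Then $H_1$ and $H_2$ are both $2$-connected.
   Context: For a graph $H$ write $v_H=|V(H)|$, $e_H=|E(H)|$. Define $d_2(H) = (e_H-1)/(v_H-2)$ if $H$ is non-empty and $v_H \geq 3$; $d_2(K_2)=1/2$; $d_2(H)=0$ otherwise. Let $m_2(H)=\max\{d_2(J) : J \subseteq H\}$. $H$ is strictly $2$-balanced if $d_2(J) < m_2(H)$ for every proper subgraph $J \subsetneq H$. For graphs $H_1,H_2$ define $d_2(H_1,H_2) = e_{H_1}/(v_{H_1} - 2 + 1/m_2(H_2))$ if $H_2$ is non-empty and $v_{H_1} \geq 2$, and $0$ otherwise; $m_2(H_1,H_2) = \max\{d_2(J,H_2) : J \subseteq H_1\}$. $H_1$ is strictly balanced with respect to $d_2(\cdot,H_2)$ if $d_2(J,H_2) < m_2(H_1,H_2)$ for every proper subgraph $J \subsetneq H_1$. *)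

(* Defs.v *)
From HB Require Import structures.
From mathcomp Require Import all_boot all_order all_algebra.
Set Implicit Arguments. Unset Strict Implicit. Unset Printing Implicit Defensive.
Import Order.TTheory GRing.Theory Num.Theory.
Local Open Scope ring_scope.

(* A finite simple graph: vertex type V : finType, adjacency e : rel V,
   assumed symmetric and irreflexive (hypotheses of the theorem). *)

Definition Eset (V : finType) (e : rel V) : {set {set V}} :=
  [set A : {set V} | [exists x, exists y, [&& x != y, e x y & A == [set x; y]]]].

Definition subgraphb (V : finType) (e : rel V)
    (J : {set V} * {set {set V}}) : bool :=
  (J.2 \subset Eset e) && [forall A in J.2, A \subset J.1].

Definition whole (V : finType) (e : rel V) : {set V} * {set {set V}} :=
  ([set: V], Eset e).

Definition d2 (v m : nat) : rat :=
  if (0 < m)%N && (3 <= v)%N then (m%:R - 1) / (v%:R - 2)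
  else if (v == 2)%N && (m == 1)%N then 1 / 2
  else 0.

Definition d2J (V : finType) (J : {set V} * {set {set V}}) : rat :=
  d2 #|J.1| #|J.2|.

(* m_2(H) = max over subgraphs J of d_2(J) (all values are >= 0). *)
Definition m2 (V : finType) (e : rel V) : rat :=
  \big[Num.max/0]_(J : {set V} * {set {set V}} | subgraphb e J) d2J J.

Definition strictly_2_balanced (V : finType) (e : rel V) : Prop :=
  forall J, subgraphb e J -> J != whole e -> d2J J < m2 e.

Definition d2_2 (v m : nat) (V2 : finType) (e2 : rel V2) : rat :=
  if (0 < #|Eset e2|)%N && (2 <= v)%N
  then m%:R / (v%:R - 2 + (m2 e2)^-1) else 0.

Definition d2_2J (V1 : finType) (J : {set V1} * {set {set V1}})
    (V2 : finType) (e2 : rel V2) : rat :=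
  d2_2 #|J.1| #|J.2| e2.

Definition m2_2 (V1 : finType) (e1 : rel V1) (V2 : finType) (e2 : rel V2) : rat :=
  \big[Num.max/0]_(J : {set V1} * {set {set V1}} | subgraphb e1 J) d2_2J J e2.

Definition strictly_balanced_wrt (V1 : finType) (e1 : rel V1)
    (V2 : finType) (e2 : rel V2) : Prop :=
  forall J, subgraphb e1 J -> J != whole e1 -> d2_2J J e2 < m2_2 e1 e2.

Definition connected_on (V : finType) (e : rel V) (S : {set V}) : Prop :=
  forall x y, x \in S -> y \in S ->
    connect [rel a b | [&& e a b, a \in S & b \in S]] x y.

(* 2-connected (Diestel): more than 2 vertices, and H - X connected
   for every set X of fewer than 2 vertices. *)
Definition two_connected (V : finType) (e : rel V) : Prop :=
  (3 <= #|V|)%N /\ connected_on e [set: V] /\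
  forall v : V, connected_on e [set~ v].

(* Main.v *)
Require Import Defs.
From mathcomp Require Import all_boot all_order all_algebra.
From mathcomp Require Import zify ring lra.
Import Order.TTheory GRing.Theory Num.Theory.
Local Open Scope ring_scope.

Lemma bigmax_attain (I : finType) (P : pred I) (F : I -> rat) :
  \big[Num.max/0]_(i | P i) F i = 0 \/
  exists2 i, P i & \big[Num.max/0]_(i | P i) F i = F i.
Proof.
elim/big_rec: _ => [|i x Pi [->|[j Pj ->]]]; first by left.
- by rewrite maxEle; case: ifP => _; [left|right; exists i].
- by rewrite maxEle; case: ifP => _; right; [exists j|exists i].
Qed.

Lemma bigmax_ge (I : finType) (P : pred I) (F : I -> rat) j :
  P j -> F j <= \big[Num.max/0]_(i | P i) F i.
Proof. exact: le_bigmax_cond. Qed.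

Lemma arith_contra (d k a1 a2 a3 a4 a5 : rat) : 0 < d -> 1 < k ->
  a1 <= d * (a3 - k) -> a2 <= d * (a4 - k) -> d * (a5 - k) <= a1 + a2 ->
  a3 + a4 <= a5 + 1 -> False.
Proof. move=> *; nra. Qed.

Lemma L7 (x : rat) : x < 1 -> 1 < 2 - x.
Proof. move=> *; lra. Qed.

Lemma L8 (c m : rat) : (1%N)%:R / ((2%N)%:R - 2 + c^-1) <= m -> c <= m.
Proof. by rewrite subrr add0r mulr1n div1r invrK. Qed.

Lemma L1 (s m c d : rat) : 0 < c -> 2 <= s -> m / (s - 2 + c) <= d -> m <= d * (s - (2 - c)).
Proof.
move=> c0 s2; have p : 0 < s - 2 + c by lra.
rewrite ler_pdivrMr // (_ : s - (2 - c) = s - 2 + c) //; ring.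
Qed.

Lemma L2 (n m c d : rat) : 0 < c -> 2 <= n -> m / (n - 2 + c) = d -> m = d * (n - (2 - c)).
Proof.
move=> c0 s2; have p : 0 < n - 2 + c by lra.
move=> <-; rewrite (_ : n - (2 - c) = n - 2 + c); last by ring.
by rewrite divfK // gt_eqF.
Qed.

Lemma L3 (s m d : rat) : 0 < d -> 2 < s -> (m - 1) / (s - 2) <= d -> m <= d * (s - (2 - d^-1)).
Proof.
move=> d0 s2; have p : 0 < s - 2 by lra.
rewrite ler_pdivrMr // => h.
have -> : d * (s - (2 - d^-1)) = d * (s - 2) + d * d^-1 by ring.
rewrite mulfV ?gt_eqF //; lra.
Qed.

Lemma L4 (n m d : rat) : 0 < d -> 2 < n -> (m - 1) / (n - 2) = d -> m = d * (n - (2 - d^-1)).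
Proof.
move=> d0 s2; have p : 0 < n - 2 by lra.
move=> h; have h' : m - 1 = d * (n - 2) by rewrite -h divfK // gt_eqF.
have -> : d * (n - (2 - d^-1)) = d * (n - 2) + d * d^-1 by ring.
rewrite mulfV ?gt_eqF //; lra.
Qed.

Lemma L5 (s d : rat) : 0 < d -> 2 <= s -> (0%N)%:R <= d * (s - (2 - d^-1)).
Proof.
move=> d0 s2.
have -> : d * (s - (2 - d^-1)) = d * (s - 2) + d * d^-1 by ring.
rewrite mulfV ?gt_eqF //; have : 0 <= d * (s - 2) by apply: mulr_ge0; lra.
move=> *; rewrite /=; lra.
Qed.

Lemma L6 (d : rat) : 0 < d -> 1 <= d * (2 - (2 - d^-1)).
Proof.
move=> d0.
have -> : d * (2 - (2 - d^-1)) = d * d^-1 by ring.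
by rewrite mulfV ?gt_eqF.
Qed.

Lemma m2_gt1_facts (V : finType) (e : rel V) : 1 < m2 e -> (3 <= #|V|)%N /\ (0 < #|Eset e|)%N.
Proof.
rewrite /m2; case: (@bigmax_attain _ (fun J => subgraphb e J) (fun J => d2J J)) => [->|[J sJ ->]].
  by rewrite ltr10.
rewrite /d2J /d2; case: ifP => [/andP[m0 v3] _|_].
  split; first by apply: leq_trans v3 (max_card _).
  apply: leq_trans m0 (subset_leq_card _); by case/andP: sJ.
case: ifP => _ h; exfalso; move: h; first by rewrite ltr_pdivlMr // mul1r.
by rewrite ltr10.
Qed.

Section Main.
Variables (V : finType) (e : rel V).
Hypotheses (sym : symmetric e) (irr : irreflexive e).

Definition Eind (S : {set V}) : {set {set V}} := [set A in Eset e | A \subset S].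

Lemma Eind_sub S : subgraphb e (S, Eind S).
Proof.
apply/andP; split; first by apply/subsetP => A; rewrite inE => /andP[].
by apply/forallP => A; apply/implyP; rewrite inE => /andP[].
Qed.

Lemma whole_sub : subgraphb e (whole e).
Proof.
apply/andP; split => //; by apply/forallP => A; apply/implyP => _; apply: subsetT.
Qed.

Lemma attain_whole (F : {set V} * {set {set V}} -> rat) :
  0 < \big[Num.max/0]_(J | subgraphb e J) F J ->
  (forall J, subgraphb e J -> J != whole e ->
      F J < \big[Num.max/0]_(J | subgraphb e J) F J) ->
  F (whole e) = \big[Num.max/0]_(J | subgraphb e J) F J.
Proof.
move=> pos st; case: (@bigmax_attain _ (fun J => subgraphb e J) F) => [h|[J sJ h]].
  by move: pos; rewrite h ltxx.
case: (eqVneq J (whole e)) => [eJ|ne]; first by rewrite h eJ.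
by have := st J sJ ne; rewrite -h ltxx.
Qed.

Lemma Eset_mem {U} : U \in Eset e -> exists x y, [/\ x != y, e x y & U = [set x; y]].
Proof.
rewrite inE => /existsP[x /existsP[y /and3P[xy exy /eqP ->]]].
by exists x, y.
Qed.

Section Conn.
Variables (d k : rat).
Hypotheses (d_gt0 : 0 < d) (k_gt1 : 1 < k) 
  (Hwhole : #|Eset e|%:R = d * (#|V|%:R - k))
  (Hsub : forall S : {set V}, (2 <= #|S|)%N -> #|Eind S|%:R <= d * (#|S|%:R - k)).

Lemma no_isolated a : (2 <= #|[set~ a]|)%N -> exists b, e a b.
Proof.
move=> n2; case: (boolP [exists b, e a b]) => [/existsP//|]; rewrite negb_exists => /forallP /= ni; exfalso.
have EE : Eind [set~ a] = Eset e.
  apply/setP => U; rewrite inE; case E: (U \in Eset e) => //=.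
  have [x [y [xy exy ->]]] := Eset_mem E.
  apply/subsetP => z; rewrite !inE => /orP[] /eqP ->; apply/eqP => za; subst.
  - by move: (ni y); rewrite exy.
  - by move: (ni x); rewrite sym exy.
have := Hsub [set~ a] (n2 : (2 <= #|[set~ a]|)%N); rewrite EE Hwhole cardsC1.
have n0 : (0 < #|V|)%N by apply/card_gt0P; exists a.
have n1 : #|V| = (#|V|.-1).+1 by lia.
rewrite [in X in X <= _]n1 -addn1 natrD.
set N := (#|V|.-1)%:R => h.
have : d * (N + 1 - k) = d * (N - k) + d by ring.
by move=> hh; move: h; rewrite hh gerDl leNgt d_gt0.
Qed.

Lemma cardU_le (A B : {set {set V}}) : (#|A :|: B| <= #|A| + #|B|)%N.
Proof. by have := cardsUI A B; lia. Qed.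

Lemma cardU_leV (A B : {set V}) : (#|A :|: B| <= #|A| + #|B|)%N.
Proof. by have := cardsUI A B; lia. Qed.

Lemma conn_compl (X : {set V}) : (#|X| <= 1)%N -> (3 <= #|V|)%N -> connected_on e (~: X).
Proof.
move=> hX n3 x y xS yS.
set r := [rel a b | [&& e a b, a \in ~: X & b \in ~: X]].
case: (boolP (connect r x y)) => // nxy; exfalso.
set A := [set z in ~: X | connect r x z].
set B := ~: X :\: A.
have AS : A \subset ~: X by apply/subsetP => z; rewrite inE => /andP[].
have xA : x \in A by rewrite inE xS connect0.
have yB : y \in B by rewrite !inE negb_and nxy orbT /= -in_setC yS.
have clos : forall a b, a \in A -> e a b -> b \notin X -> b \in A.
  move=> a b; rewrite !inE => /andP[aS xa] eab bX; rewrite bX /=.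
  apply: connect_trans xa _; apply: connect1; by rewrite /= eab !inE bX aS.
have inB : forall b, (b \in B) = (b \notin A) && (b \notin X).
  by move=> b; rewrite !inE.
have noXX : forall u w, u != w -> u \in X -> w \in X -> False.
  move=> u w uw uX wX; have : [set u; w] \subset X.
    by apply/subsetP => z; rewrite !inE => /orP[] /eqP ->.
  move/subset_leq_card; rewrite cards2 uw; lia.
have nC : (2 <= #|[set~ x]|)%N by rewrite cardsC1; lia.
have nCy : (2 <= #|[set~ y]|)%N by rewrite cardsC1; lia.
have szA : (2 <= #|A :|: X|)%N.
  have [b exb] := no_isolated x nC.
  have xb : x != b by apply/eqP => xb; subst; rewrite irr in exb.
  have bP : b \in A :|: X.
    rewrite in_setU; case bX: (b \in X); first by rewrite orbT.
    by rewrite (clos x b xA exb) ?bX.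
  have : [set x; b] \subset A :|: X.
    by apply/subsetP => z; rewrite in_set2 => /orP[] /eqP ->; rewrite ?bP // in_setU xA.
  by move/subset_leq_card; rewrite cards2 xb.
have szB : (2 <= #|B :|: X|)%N.
  have [b exb] := no_isolated y nCy.
  have xb : y != b by apply/eqP => xb; subst; rewrite irr in exb.
  have bP : b \in B :|: X.
    rewrite in_setU; case bX: (b \in X); first by rewrite orbT.
    rewrite orbF inB bX andbT; apply/negP => bA.
    have yX : y \notin X by move: yB; rewrite inB => /andP[].
    have eby : e b y by rewrite sym.
    have := clos b y bA eby yX.
    by move: yB; rewrite inB => /andP[/negP].
  have : [set y; b] \subset B :|: X.
    by apply/subsetP => z; rewrite in_set2 => /orP[] /eqP ->; rewrite ?bP // in_setU yB.
  by move/subset_leq_card; rewrite cards2 xb.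
have cover : Eset e \subset Eind (A :|: X) :|: Eind (B :|: X).
  apply/subsetP => U EU; have [u [w [uw euw UE]]] := Eset_mem EU.
  move: (EU); rewrite inE => EU'.
  rewrite in_setU /Eind !inE EU' /= UE !subUset !sub1set !in_setU !inB.
  have cAB : forall a b, e a b -> a \in A -> b \notin X -> b \in A.
    by move=> a b eab aA bX; apply: clos aA eab bX.
  have wu : w != u by rewrite eq_sym.
  have ewu : e w u by rewrite sym.
  have := noXX u w uw; have := noXX w u wu.
  have := cAB u w euw; have := cAB w u ewu.
  by case: (u \in A); case: (u \in X); case: (w \in A); case: (w \in X); auto.
have mE := leq_trans (subset_leq_card cover) (cardU_le _ _).
have vA := cardU_leV A X.
have vB := cardU_leV B X.
have sAB : (#|A| + #|B| = #|~: X|)%N.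
  by have := cardsID A (~: X); rewrite (setIidPr AS) => <-.
have sX := cardsC X.
have vs : (#|A :|: X| + #|B :|: X| <= #|V| + 1)%N by lia.
have hA := Hsub _ szA; have hB := Hsub _ szB.
have mE' : (#|Eset e|%:R <= (#|Eind (A :|: X)|%:R + #|Eind (B :|: X)|%:R) :> rat).
  by rewrite -natrD ler_nat.
have vs' : (#|A :|: X|%:R + #|B :|: X|%:R <= (#|V|%:R + 1) :> rat).
  by rewrite -natrD (_ : #|V|%:R + 1 = (#|V| + 1)%:R :> rat) ?ler_nat // natrD.
rewrite Hwhole in mE'.
move: hA hB mE' vs'; move: (#|Eind (A :|: X)|%:R) (#|Eind (B :|: X)|%:R) (#|A :|: X|%:R) (#|B :|: X|%:R) (#|V|%:R) => a1 a2 a3 a4 a5.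
by apply: arith_contra.
Qed.

Lemma two_conn_of : (3 <= #|V|)%N -> two_connected e.
Proof.
move=> n3; split => //; split.
  by rewrite -setC0; apply: conn_compl => //; rewrite cards0.
by move=> v; apply: conn_compl => //; rewrite cards1.
Qed.
End Conn.

Lemma Eind_small (S : {set V}) : (#|S| <= 2)%N -> (#|Eind S| <= 1)%N.
Proof.
move=> hS; rewrite -(cards1 S); apply: subset_leq_card; apply/subsetP => U.
rewrite /Eind in_set => /andP[EU US]; have [x [y [xy _ UE]]] := Eset_mem EU.
rewrite in_set1 eqEcard US /=; apply: leq_trans hS _.
by rewrite UE cards2 xy.
Qed.

Lemma two_conn_sb : 1 < m2 e -> strictly_2_balanced e -> two_connected e.
Proof.
move=> m1 sb; have [n3 m0] := @m2_gt1_facts _ _ m1.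
have d0 : 0 < m2 e by apply: lt_trans m1; rewrite ltr01.
have hw0 : d2J (whole e) = m2 e := @attain_whole (fun J => d2J J) d0 sb.
have hw : d2 #|V| #|Eset e| = m2 e by rewrite -hw0 /d2J /whole /= cardsT.
rewrite /d2 m0 n3 /= in hw.
have Hs : forall S, d2J (S, Eind S) <= m2 e :=
  fun S => @bigmax_ge _ (fun J => subgraphb e J) (fun J => d2J J) _ (Eind_sub S).
move: (m2 e) m1 hw Hs d0 => d m1 hw Hs d0.
apply: (@two_conn_of d (2 - d^-1)) => //.
- by apply: L7; rewrite invf_lt1.
- by apply: L4 => //; rewrite ltr_nat.
- move=> S S2; have := Hs S.
  rewrite /d2J /= /d2.
  have S2' : (2 : rat) <= #|S|%:R by rewrite ler_nat.
  case: ifP => [/andP[mS sS] h|hc _].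
    by apply: L3 => //; rewrite ltr_nat.
  case: (posnP #|Eind S|) => [->|mS]; first by apply: L5.
  have sS : #|S| = 2%N by move: hc; rewrite mS /=; lia.
  have m1' : #|Eind S| = 1%N by have := Eind_small _ (eq_leq sS); lia.
  rewrite m1' sS mulr1n; exact: L6 d0.
Qed.

Lemma two_conn_sbw (V2 : finType) (e2 : rel V2) :
  1 < m2 e -> 1 < m2 e2 -> strictly_balanced_wrt e e2 -> two_connected e.
Proof.
move=> m1 m12 sb; have [n3 m0] := @m2_gt1_facts _ _ m1.
have [_ m02] := @m2_gt1_facts _ _ m12.
have [U EU] : exists U, U \in Eset e by apply/card_gt0P.
have [x [y [xy exy UE]]] := Eset_mem EU.
have sJ : subgraphb e ([set x; y], [set U]).
  apply/andP; split; first by rewrite sub1set.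
  by apply/forallP => A; apply/implyP; rewrite in_set1 => /eqP -> /=; rewrite UE.
have hJ0 : d2_2J ([set x; y], [set U]) e2 <= m2_2 e e2 :=
  @bigmax_ge _ (fun J => subgraphb e J) (fun J => d2_2J J e2) _ sJ.
have hJ : (1%N)%:R / ((2%N)%:R - 2 + (m2 e2)^-1) <= m2_2 e e2.
  by move: hJ0; rewrite /d2_2J /d2_2 /= cards2 xy cards1 m02.
have Hs0 : forall S, d2_2J (S, Eind S) e2 <= m2_2 e e2 :=
  fun S => @bigmax_ge _ (fun J => subgraphb e J) (fun J => d2_2J J e2) _ (Eind_sub S).
have Hs : forall S : {set V}, (2 <= #|S|)%N ->
    #|Eind S|%:R / (#|S|%:R - 2 + (m2 e2)^-1) <= m2_2 e e2.
  by move=> S S2; move: (Hs0 S); rewrite /d2_2J /d2_2 m02 /= S2.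
have d0 : 0 < m2_2 e e2.
  have c0 : 0 < m2 e2 by apply: lt_trans m12; rewrite ltr01.
  have h8 := @L8 _ _ hJ.
  exact: (lt_le_trans c0 h8).
have hw0 : d2_2J (whole e) e2 = m2_2 e e2 := @attain_whole (fun J => d2_2J J e2) d0 sb.
have hw : #|Eset e|%:R / (#|V|%:R - 2 + (m2 e2)^-1) = m2_2 e e2.
  by rewrite -hw0 /d2_2J /whole /= cardsT /d2_2 m02 (ltnW n3).
clear hw0 Hs0 hJ0 sb hJ.
move: (m2_2 e e2) hw Hs d0 => d hw Hs d0.
move: (m2 e2) m12 hw Hs => c2 m12 hw Hs.
have c0 : 0 < c2^-1 by rewrite invr_gt0; apply: lt_trans m12; rewrite ltr01.
have c1 : c2^-1 < 1 by rewrite invf_lt1 //; apply: lt_trans m12; rewrite ltr01.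
have n2 : (2 : rat) <= #|V|%:R by rewrite ler_nat ltnW.
apply: (@two_conn_of d (2 - c2^-1)) => //.
- by apply: L7.
- by apply: L2.
- move=> S S2; have := Hs S S2.
  have S2' : (2 : rat) <= #|S|%:R by rewrite ler_nat.
  by apply: L1.
Qed.
End Main.

Theorem lemma4p1 (V1 V2 : finType) (e1 : rel V1) (e2 : rel V2)
  (sym1 : symmetric e1) (irr1 : irreflexive e1)
  (sym2 : symmetric e2) (irr2 : irreflexive e2) :
  ((m2 e2 < m2 e1) /\ (1 < m2 e2) /\ strictly_2_balanced e2 /\
     strictly_balanced_wrt e1 e2)
  \/ ((m2 e1 = m2 e2) /\ (1 < m2 e2) /\ strictly_2_balanced e1 /\
     strictly_2_balanced e2) ->
  two_connected e1 /\ two_connected e2.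
Proof.
case => [[m21 [m12 [sb2 sbw]]] | [e12 [m12 [sb1 sb2]]]].
  split; last exact: (@two_conn_sb V2 e2 sym2 irr2 m12 sb2).
  exact: (@two_conn_sbw V1 e1 sym1 irr1 V2 e2 (lt_trans m12 m21) m12 sbw).
split; last exact: (@two_conn_sb V2 e2 sym2 irr2 m12 sb2).
by apply: (@two_conn_sb V1 e1 sym1 irr1); rewrite ?e12.
Qed.
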